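(* Let $\mathcal G=\mathfrak g_1\oplus\mathfrak g_2$ and $\Theta\in C^1_{\mathsf{LTS}}(\mathcal G,\mathcal G)$, decomposed as $\Theta=\hat\phi_1+\hat\mu_1+\hat\psi+\hat\mu_2+\hat\phi_2$. Then the Maurer–Cartan equation $[\Theta,\Theta]_{\mathsf{LTS}}=0$ is equivalent to the following conditions: $[\hat\phi_1,\hat\mu_1]_{\mathsf{LTS}}=0$; $[\hat\psi,\hat\phi_1]_{\mathsf{LTS}}+\frac12[\hat\mu_1,\hat\mu_1]_{\mathsf{LTS}}=0$; $[\hat\phi_1,\hat\mu_2]_{\mathsf{LTS}}+[\hat\psi,\hat\mu_1]_{\mathsf{LTS}}=0$; $[\hat\phi_1,\hat\phi_2]_{\mathsf{LTS}}+[\hat\mu_1,\hat\mu_2]_{\mathsf{LTS}}+\frac12[\hat\psi,\hat\psi]_{\mathsf{LTS}}=0$; $[\hat\mu_1,\hat\phi_2]_{\mathsf{LTS}}+[\hat\psi,\hat\mu_2]_{\mathsf{LTS}}=0$; $[\hat\psi,\hat\phi_2]_{\mathsf{LTS}}+\frac12[\hat\mu_2,\hat\mu_2]_{\mathsf{LTS}}=0$; $[\hat\mu_2,\hat\phi_2]_{\mathsf{LTS}}=0$.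
   Context: All vector spaces are over a field of characteristic $0$. Cochains: $C^p(\mathcal G,\mathcal G)=\mathrm{Hom}(\otimes^{2p+1}\mathcal G,\mathcal G)$, arguments $(\mathfrak X_1,\dots,\mathfrak X_p,x)$, $\mathfrak X_i=x_i\otimes y_i$; for $P\in C^p,Q\in C^q$, $(P\circ Q)(\mathfrak X_1,\dots,\mathfrak X_{p+q},x)=\sum_{k=1}^p(-1)^{(k-1)q}\sum_{\sigma\in\mathbb S(k-1,q)}(-1)^\sigma P(\mathfrak X_{\sigma(1)},\dots,\mathfrak X_{\sigma(k-1)},Q(\mathfrak X_{\sigma(k)},\dots,\mathfrak X_{\sigma(k+q-1)},x_{k+q})\otimes y_{k+q},\mathfrak X_{k+q+1},\dots,x)+\sum_{k=1}^p(-1)^{(k-1)q}\sum_{\sigma\in\mathbb S(k-1,q)}(-1)^\sigma P(\mathfrak X_{\sigma(1)},\dots,\mathfrak X_{\sigma(k-1)},x_{k+q}\otimes Q(\mathfrak X_{\sigma(k)},\dots,\mathfrak X_{\sigma(k+q-1)},y_{k+q}),\mathfrak X_{k+q+1},\dots,x)+\sum_{\sigma\in\mathbb S(p,q)}(-1)^\sigma P(\mathfrak X_{\sigma(1)},\dots,\mathfrak X_{\sigma(p)},Q(\mathfrak X_{\sigma(p+1)},\dots,\mathfrak X_{\sigma(p+q)},x))$ ($\mathbb S$ = shuffles), $[P,Q]=P\circ Q-(-1)^{pq}Q\circ P$. $C^p_{\mathsf{LTS}}(\mathcal G,\mathcal G)$ is the subspace of $P$ with $P(\dots,x,x,y)=0$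 and $P(\dots,x,y,z)+P(\dots,y,z,x)+P(\dots,z,x,y)=0$; the restricted bracket is $[\cdot,\cdot]_{\mathsf{LTS}}$. Decomposition: writing $\Theta(a,b,c)=[a,b,c]$ and $[a,b,c]_i$ for its $\mathfrak g_i$-component, with $x,y,z\in\mathfrak g_1$, $u,v,w\in\mathfrak g_2$: $\hat\phi_1((x,u),(y,v),(z,w))=(0,[x,y,z]_2)$; $\hat\mu_1=([x,y,z]_1,[x,y,w]_2+[u,y,z]_2-[v,x,z]_2)$; $\hat\psi=([x,y,w]_1+[u,y,z]_1-[v,x,z]_1,[u,v,z]_2+[x,v,w]_2-[y,u,w]_2)$; $\hat\mu_2=([u,v,z]_1+[x,v,w]_1-[y,u,w]_1,[u,v,w]_2)$; $\hat\phi_2=([u,v,w]_1,0)$. These are the components of $\Theta$ of bidegrees $3|-1,2|0,1|1,0|2,-1|3$ (bidegree $l|k$ meaning: tensors with $l+1$ factors from $\mathfrak g_1$ and $k$ from $\mathfrak g_2$ go to $\mathfrak g_1$, tensors with $l$ from $\mathfrak g_1$ and $k+1$ from $\mathfrak g_2$ go to $\mathfrak g_2$, all other tensor types go to $0$). *)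

(* Defs.v *)
From HB Require Import structures.
From mathcomp Require Import all_boot all_order fingroup perm all_algebra.
Set Implicit Arguments.
Unset Strict Implicit.
Unset Printing Implicit Defensive.
Import GRing.Theory.
Local Open Scope ring_scope.

(* A p-cochain in C^p(G,G) = Hom(G^{(x)(2p+1)}, G) is represented by its values
   on pure tensors: P X x = P(X_1,...,X_p,x) with X_i = (X (i-1)).1 (x) (X (i-1)).2
   (0-based indexing of the X's; only X 0 .. X (p-1) are used). *)
Definition cochain (V : Type) := (nat -> V * V) -> V -> V.

Definition shuffle (n a : nat) (s : 'S_n) : bool :=
  [forall i : 'I_n, forall j : 'I_n,
     ((i < j) && ((j < a) || (a <= i)))%N ==> (s i < s j)%N].

Definition sh (n : nat) (s : 'S_n) (i : nat) : nat :=
  oapp (fun j : 'I_n => nat_of_ord (s j)) i (insub i : option 'I_n).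

Section Bracket.
Variables (K : fieldType) (V : lmodType K).

(* arguments of P in the first (resp. second) family of terms of P o Q:
   (X_{s(1)},..,X_{s(k-1)}, Q(X_{s(k)},..,X_{s(k+q-1)},x_{k+q}) (x) y_{k+q},
    X_{k+q+1}, ...), here with k0 = k-1 *)
Definition insQ1 (q : nat) (Q : cochain V) (X : nat -> V * V) (k0 : nat)
  (s : 'S_(k0 + q)) : nat -> V * V := fun j =>
  if (j < k0)%N then X (sh s j)
  else if j == k0 then (Q (fun i => X (sh s (k0 + i))) (X (k0 + q)%N).1,
                        (X (k0 + q)%N).2)
  else X (j + q)%N.

Definition insQ2 (q : nat) (Q : cochain V) (X : nat -> V * V) (k0 : nat)
  (s : 'S_(k0 + q)) : nat -> V * V := fun j =>
  if (j < k0)%N then X (sh s j)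
  else if j == k0 then ((X (k0 + q)%N).1,
                        Q (fun i => X (sh s (k0 + i))) (X (k0 + q)%N).2)
  else X (j + q)%N.

Definition circ (p q : nat) (P Q : cochain V) : cochain V := fun X x =>
  \sum_(k0 < p) (-1) ^+ (k0 * q) *:
     \sum_(s : 'S_(k0 + q) | shuffle k0 s)
        (-1) ^+ odd_perm s *: (P (insQ1 Q X s) x + P (insQ2 Q X s) x)
  + \sum_(s : 'S_(p + q) | shuffle p s)
        (-1) ^+ odd_perm s *:
          P (fun j => X (sh s j)) (Q (fun j => X (sh s (p + j)%N)) x).

Definition bracket (p q : nat) (P Q : cochain V) : cochain V := fun X x =>
  circ p q P Q X x - (-1) ^+ (p * q) *: circ q p Q P X x.

Definition coch1 (T : V -> V -> V -> V) : cochain V :=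
  fun X x => T (X 0%N).1 (X 0%N).2 x.

End Bracket.

Section Decomposition.
Variables (K : fieldType) (V1 V2 : lmodType K).
Local Notation G := (V1 * V2)%type.
Variable T : G -> G -> G -> G.

Definition in1 (x : V1) : G := (x, 0).
Definition in2 (u : V2) : G := (0, u).

(* With a = (x,u), b = (y,v), c = (z,w); [a,b,c]_i = (T a b c).i *)
Definition phi1_hat (a b c : G) : G :=
  (0, (T (in1 a.1) (in1 b.1) (in1 c.1)).2).

Definition mu1_hat (a b c : G) : G :=
  ((T (in1 a.1) (in1 b.1) (in1 c.1)).1,
   (T (in1 a.1) (in1 b.1) (in2 c.2)).2 + (T (in2 a.2) (in1 b.1) (in1 c.1)).2
     - (T (in2 b.2) (in1 a.1) (in1 c.1)).2).

Definition psi_hat (a b c : G) : G :=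
  ((T (in1 a.1) (in1 b.1) (in2 c.2)).1 + (T (in2 a.2) (in1 b.1) (in1 c.1)).1
     - (T (in2 b.2) (in1 a.1) (in1 c.1)).1,
   (T (in2 a.2) (in2 b.2) (in1 c.1)).2 + (T (in1 a.1) (in2 b.2) (in2 c.2)).2
     - (T (in1 b.1) (in2 a.2) (in2 c.2)).2).

Definition mu2_hat (a b c : G) : G :=
  ((T (in2 a.2) (in2 b.2) (in1 c.1)).1 + (T (in1 a.1) (in2 b.2) (in2 c.2)).1
     - (T (in1 b.1) (in2 a.2) (in2 c.2)).1,
   (T (in2 a.2) (in2 b.2) (in2 c.2)).2).

Definition phi2_hat (a b c : G) : G :=
  ((T (in2 a.2) (in2 b.2) (in2 c.2)).1, 0).

End Decomposition.

Definition br1 (K : fieldType) (V : lmodType K) (A B : V -> V -> V -> V) : cochain V :=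
  bracket 1 1 (coch1 A) (coch1 B).

(* Main.v *)
Require Import Defs.
From HB Require Import structures.
From mathcomp Require Import all_boot all_order fingroup perm all_algebra.
Import GRing.Theory.
Local Open Scope ring_scope.
Set Implicit Arguments.
Unset Strict Implicit.
Unset Printing Implicit Defensive.
Lemma I2 (i : 'I_2) : i = ord0 \/ i = ord_max.
Proof. case: i => [[|[|k]] Hi]; [left|right|by []]; exact: val_inj. Qed.
Lemma S2all (s : 'S_2) : s = 1%g \/ s = tperm ord0 ord_max.
Proof.
have inj := @perm_inj _ s.
case: (I2 (s ord0)) => h0.
- left; apply/permP => i; rewrite perm1; case: (I2 i) => -> //.
  case: (I2 (s ord_max)) => // h1; by move: h1; rewrite -h0 => /inj.
- right; apply/permP => i; case: (I2 i) => ->.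
  + by rewrite tpermL h0.
  + rewrite tpermR; case: (I2 (s ord_max)) => h1; first done.
    by have /(congr1 val) := inj ord0 ord_max (etrans h0 (esym h1)).
Qed.
Lemma S1all (s : 'S_1) : s = 1%g.
Proof. apply/permP => i; rewrite perm1; by rewrite (ord1 i) (ord1 (s ord0)). Qed.

Lemma shE n (s : 'S_n) i (Hi : (i < n)%N) : sh s i = s (Ordinal Hi).
Proof. by rewrite /sh insubT /=. Qed.

Lemma sh0 (s : 'S_2) : sh s 0 = s ord0.
Proof. by rewrite (@shE _ s _ (isT : (0 < 2)%N)); congr (nat_of_ord (s _)); apply: val_inj. Qed.
Lemma sh1 (s : 'S_2) : sh s 1 = s ord_max.
Proof. by rewrite (@shE _ s _ (isT : (1 < 2)%N)); congr (nat_of_ord (s _)); apply: val_inj. Qed.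
Lemma sh10 (s : 'S_1) : sh s 0 = 0%N.
Proof. by rewrite (@shE _ s _ (isT : (0 < 1)%N)) (ord1 (s _)). Qed.

Lemma tp_neq1 : tperm ord0 (ord_max : 'I_2) != 1%g.
Proof. by apply/eqP => /permP /(_ ord0); rewrite tpermL perm1. Qed.

Lemma sumS2 (V : zmodType) (P : pred 'S_2) (F : 'S_2 -> V) :
  \sum_(s | P s) F s = (if P 1%g then F 1%g else 0) + (if P (tperm ord0 ord_max) then F (tperm ord0 ord_max) else 0).
Proof.
rewrite big_mkcond (bigD1 1%g) //= (bigD1 (tperm ord0 ord_max)) /=; last by rewrite tp_neq1.
rewrite big1 ?addr0 // => s /andP[h1 h2]; by case: (S2all s) h1 h2 => ->; rewrite eqxx.
Qed.

Lemma shuf0 (s : 'S_1) : shuffle 0 s.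
Proof. by apply/forallP => i; apply/forallP => j; rewrite (ord1 i) (ord1 j). Qed.
Lemma shuf1 (s : 'S_2) : shuffle 1 s.
Proof. by apply/forallP => i; apply/forallP => j; case: (I2 i) (I2 j) => -> [] ->. Qed.

Definition c11 (K : fieldType) (V : lmodType K) (A B : V -> V -> V -> V) (a b c d x : V) : V :=
  A (B a b c) d x + A c (B a b d) x + A a b (B c d x) - A c d (B a b x).

Lemma circ11 (K : fieldType) (V : lmodType K) (A B : V -> V -> V -> V) X x :
  circ 1 1 (coch1 A) (coch1 B) X x = c11 A B (X 0%N).1 (X 0%N).2 (X 1%N).1 (X 1%N).2 x.
Proof.
rewrite /circ big_ord1 (big_pred1 1%g); last by move=> s; rewrite shuf0 (S1all s) /= eqxx.
rewrite sumS2 !shuf1 /= !odd_perm1 odd_tperm /= /coch1 /insQ1 /insQ2 /= !sh10 !sh0 !sh1.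
rewrite !perm1 tpermL tpermR /= add0n mul0n expr0 expr1 !scale1r scaleN1r /c11.
by rewrite addrA.
Qed.

Lemma br1E (K : fieldType) (V : lmodType K) (A B : V -> V -> V -> V) X x :
  br1 A B X x = c11 A B (X 0%N).1 (X 0%N).2 (X 1%N).1 (X 1%N).2 x
              + c11 B A (X 0%N).1 (X 0%N).2 (X 1%N).1 (X 1%N).2 x.
Proof. by rewrite /br1 /bracket !circ11 expr1 scaleN1r opprK. Qed.

Section Gen.
Context (K : fieldType) (V : lmodType K).
Implicit Types (A B : V -> V -> V -> V).

Definition lin3 A :=
  [/\ forall (r : K) a a' b c, A (r *: a + a') b c = r *: A a b c + A a' b c,
      forall (r : K) a b b' c, A a (r *: b + b') c = r *: A a b c + A a b' c
    & forall (r : K) a b c c', A a b (r *: c + c') = r *: A a b c + A a b c'].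

Lemma zero_of (f : V -> V) : (forall (r : K) u u', f (r *: u + u') = r *: f u + f u') -> f 0 = 0.
Proof.
move=> h; have := h 1 0 0; rewrite !scale1r addr0 => e.
by apply: (@addrI _ (f 0)); rewrite -e addr0.
Qed.

Lemma lin_add (f : V -> V) : (forall (r : K) u u', f (r *: u + u') = r *: f u + f u') ->
  forall u u', f (u + u') = f u + f u'.
Proof. by move=> h u u'; rewrite -{1}(scale1r u) h scale1r. Qed.

Lemma lin_scl (f : V -> V) : (forall (r : K) u u', f (r *: u + u') = r *: f u + f u') ->
  forall r u, f (r *: u) = r *: f u.
Proof. by move=> h r u; rewrite -(addr0 (r *: u)) h (zero_of h) addr0. Qed.

Lemma lin_sum (f : V -> V) : (forall (r : K) u u', f (r *: u + u') = r *: f u + f u') ->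
  forall I (s : seq I) (F : I -> V), f (\sum_(i <- s) F i) = \sum_(i <- s) f (F i).
Proof. by move=> h I s F; apply: (big_morph f (lin_add h) (zero_of h)). Qed.

Lemma lin_opp (f : V -> V) : (forall (r : K) u u', f (r *: u + u') = r *: f u + f u') ->
  forall u, f (- u) = - f u.
Proof. by move=> h u; rewrite -scaleN1r (lin_scl h) scaleN1r. Qed.

Lemma lin_sub (f : V -> V) : (forall (r : K) u u', f (r *: u + u') = r *: f u + f u') ->
  forall u u', f (u - u') = f u - f u'.
Proof. by move=> h u u'; rewrite (lin_add h) (lin_opp h). Qed.

Lemma c11_ext A A' B B' a b c d x :
  (forall a b c, A a b c = A' a b c) -> (forall a b c, B a b c = B' a b c) ->
  c11 A B a b c d x = c11 A' B' a b c d x.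
Proof. by move=> hA hB; rewrite /c11 !hB !hA. Qed.

Lemma c11_suml I (r : seq I) (F : I -> V -> V -> V -> V) B a b c d x :
  c11 (fun a b c => \sum_(i <- r) F i a b c) B a b c d x = \sum_(i <- r) c11 (F i) B a b c d x.
Proof. by rewrite /c11 -!big_split -sumrB. Qed.

Lemma c11_sumr I (r : seq I) (F : I -> V -> V -> V -> V) A a b c d x : lin3 A ->
  c11 A (fun a b c => \sum_(i <- r) F i a b c) a b c d x = \sum_(i <- r) c11 A (F i) a b c d x.
Proof.
case=> h1 h2 h3; rewrite /c11.
rewrite (lin_sum (fun r u u' => h1 r u u' d x)).
rewrite (lin_sum (fun r u u' => h2 r c u u' x)).
rewrite (lin_sum (fun r u u' => h3 r a b u u')).
rewrite (lin_sum (fun r u u' => h3 r c d u u')).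
by rewrite -!big_split -sumrB.
Qed.

Lemma c11_wt (S : V -> V) (Slin : forall (r : K) u u', S (r *: u + u') = r *: S u + S u')
  (t : K) wA wB A B : lin3 A ->
  (forall a b c, t *: A (S a) (S b) (S c) = t ^+ wA *: S (A a b c)) ->
  (forall a b c, t *: B (S a) (S b) (S c) = t ^+ wB *: S (B a b c)) ->
  forall a b c d x,
  t ^+ 2 *: c11 A B (S a) (S b) (S c) (S d) (S x) = t ^+ (wA + wB) *: S (c11 A B a b c d x).
Proof.
case=> h1 h2 h3 hA hB a b c d x.
have s1 := fun u => lin_scl (fun r v v' => h1 r v v' (S d) (S x)) t u.
have s2 := fun u => lin_scl (fun r v v' => h2 r (S c) v v' (S x)) t u.
have s3 := fun u => lin_scl (fun r v v' => h3 r (S a) (S b) v v') t u.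
have s3' := fun u => lin_scl (fun r v v' => h3 r (S c) (S d) v v') t u.
have E : forall v : V, t ^+ 2 *: v = t *: (t *: v) by move=> v; rewrite scalerA expr2.
have F : forall v : V, t ^+ wB *: (t ^+ wA *: v) = t ^+ (wA + wB) *: v
  by move=> v; rewrite scalerA -exprD addnC.
have g1 := lin_scl (fun r v v' => h1 r v v' (S d) (S x)).
have g2 := lin_scl (fun r v v' => h2 r (S c) v v' (S x)).
have g3 := lin_scl (fun r v v' => h3 r (S a) (S b) v v').
have g3' := lin_scl (fun r v v' => h3 r (S c) (S d) v v').
have C : forall (v : V), t *: (t ^+ wB *: v) = t ^+ wB *: (t *: v)
  by move=> v; rewrite !scalerA mulrC.
have T1 : t *: (t *: A (B (S a) (S b) (S c)) (S d) (S x)) = t ^+ (wA + wB) *: S (A (B a b c) d x)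
  by rewrite -s1 hB g1 C hA F.
have T2 : t *: (t *: A (S c) (B (S a) (S b) (S d)) (S x)) = t ^+ (wA + wB) *: S (A c (B a b d) x)
  by rewrite -s2 hB g2 C hA F.
have T3 : t *: (t *: A (S a) (S b) (B (S c) (S d) (S x))) = t ^+ (wA + wB) *: S (A a b (B c d x))
  by rewrite -s3 hB g3 C hA F.
have T4 : t *: (t *: A (S c) (S d) (B (S a) (S b) (S x))) = t ^+ (wA + wB) *: S (A c d (B a b x))
  by rewrite -s3' hB g3' C hA F.
rewrite /c11 !scalerDr !scalerN !E T1 T2 T3 T4.
by rewrite (lin_sub Slin) !(lin_add Slin) !scalerDr scalerN.
Qed.
End Gen.


Lemma natr_neq (K : fieldType) (ch : [pchar K] =i pred0) (m n : nat) :
  (m < n)%N -> (m%:R : K) != n%:R.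
Proof.
move=> lt; rewrite eq_sym -subr_eq0 -(natrB K (ltnW lt)).
by move/pcharf0P: ch => ->; rewrite subn_eq0 -ltnNge.
Qed.

Lemma poly0 (K : fieldType) (ch : [pchar K] =i pred0) (V : lmodType K) n (v : nat -> V) :
  (forall t : K, t != 0 -> \sum_(0 <= d < n) t ^+ d *: v d = 0) ->
  forall d, (d < n)%N -> v d = 0.
Proof.
elim: n v => [|n IH] v H d Hd; first by [].
have n2 : (2 : K) != 0 by move/pcharf0P: (ch) => ->.
have lt : forall e, (e < n)%N -> v e = 0.
  move=> e He.
  have Hw : forall t : K, t != 0 ->
      \sum_(0 <= e < n) t ^+ e *: ((2 ^+ e - 2 ^+ n) *: v e) = 0.
    move=> t t0; have := H (2 * t) (mulf_neq0 n2 t0); have := H t t0.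
    rewrite !big_nat_recr //= => e1 e2.
    transitivity ((\sum_(0 <= e < n) (2 * t) ^+ e *: v e + (2 * t) ^+ n *: v n)
       - 2 ^+ n *: (\sum_(0 <= e < n) t ^+ e *: v e + t ^+ n *: v n));
      last by rewrite e1 e2 scaler0 subr0.
    rewrite scalerDr scaler_sumr opprD addrACA -sumrB.
    rewrite [(2 * t) ^+ n]exprMn [2 ^+ n *: (t ^+ n *: v n)]scalerA subrr addr0.
    apply: eq_bigr => i _; rewrite !scalerA -scalerBl; congr (_ *: _); by rewrite exprMn mulrBr !(mulrC (t ^+ i)).
  have := IH _ Hw e He; move/eqP; rewrite scaler_eq0 => /orP[|/eqP //].
  rewrite subr_eq0 -!natrX => /eqP h; exfalso; move: h; apply/eqP.
  by apply: natr_neq => //; rewrite ltn_exp2l.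
move: Hd; rewrite ltnS leq_eqVlt => /orP[/eqP ->|]; last exact: lt.
have := H 1 (oner_neq0 K); rewrite big_nat_recr //= big1_seq ?add0r ?expr1n ?scale1r //.
by move=> i; rewrite mem_index_iota => /andP[_ /lt ->]; rewrite scaler0.
Qed.


Section Spec.
Context (K : fieldType) (V1 V2 : lmodType K).
Local Notation G := (V1 * V2)%type.
Implicit Type T : G -> G -> G -> G.

Definition Sc (t : K) (p : G) : G := (p.1, t *: p.2).

Lemma pairE (p q : G) : p.1 = q.1 -> p.2 = q.2 -> p = q.
Proof. by case: p q => [? ?] [? ?] /= -> ->. Qed.

Lemma Sc_lin t : forall (r : K) u u', Sc t (r *: u + u') = r *: Sc t u + Sc t u'.
Proof.
move=> r [u1 u2] [u1' u2']; apply: pairE; rewrite /Sc //=.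
by rewrite scalerDr !scalerA mulrC.
Qed.

Lemma in1_lin (r : K) (x x' : V1) : in1 V2 (r *: x + x') = r *: in1 V2 x + in1 V2 x'.
Proof. by apply: pairE; rewrite //= scaler0 addr0. Qed.
Lemma in2_lin (r : K) (x x' : V2) : in2 V1 (r *: x + x') = r *: in2 V1 x + in2 V1 x'.
Proof. by apply: pairE; rewrite //= scaler0 addr0. Qed.
Lemma in1_scl (r : K) (x : V1) : in1 V2 (r *: x) = r *: in1 V2 x.
Proof. by apply: pairE; rewrite //= scaler0. Qed.
Lemma in2_scl (r : K) (x : V2) : in2 V1 (r *: x) = r *: in2 V1 x.
Proof. by apply: pairE; rewrite //= scaler0. Qed.

Lemma comb3 (W : lmodType K) (r : K) (a b c a' b' c' : W) :
  r *: (a + b - c) + (a' + b' - c') = (r *: a + a') + (r *: b + b') - (r *: c + c').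
Proof.
by rewrite !scalerDr scalerN opprD !addrA [LHS](ACl (1*4*2*5*3*6)).
Qed.

Lemma comb0 (W : lmodType K) (r : K) : r *: (0 : W) + 0 = 0.
Proof. by rewrite scaler0 addr0. Qed.

Ltac linsolve h1 h2 h3 :=
  apply: pairE; rewrite /= ?in1_lin ?in2_lin ?h1 ?h2 ?h3 /= ?comb3 ?comb0 //.

Lemma phi1_lin T : lin3 T -> lin3 (phi1_hat T).
Proof. case=> h1 h2 h3; split=> r a a' b c; linsolve h1 h2 h3. Qed.
Lemma mu1_lin T : lin3 T -> lin3 (mu1_hat T).
Proof. case=> h1 h2 h3; split=> r a a' b c; linsolve h1 h2 h3. Qed.
Lemma psi_lin T : lin3 T -> lin3 (psi_hat T).
Proof. case=> h1 h2 h3; split=> r a a' b c; linsolve h1 h2 h3. Qed.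
Lemma mu2_lin T : lin3 T -> lin3 (mu2_hat T).
Proof. case=> h1 h2 h3; split=> r a a' b c; linsolve h1 h2 h3. Qed.
Lemma phi2_lin T : lin3 T -> lin3 (phi2_hat T).
Proof. case=> h1 h2 h3; split=> r a a' b c; linsolve h1 h2 h3. Qed.

Lemma lin3_scl T : lin3 T ->
  [/\ forall (r : K) a b c, T (r *: a) b c = r *: T a b c,
      forall (r : K) a b c, T a (r *: b) c = r *: T a b c
    & forall (r : K) a b c, T a b (r *: c) = r *: T a b c].
Proof.
case=> h1 h2 h3; split=> r a b c.
- exact: (lin_scl (fun r u u' => h1 r u u' b c)).
- exact: (lin_scl (fun r u u' => h2 r a u u' c)).
- exact: (lin_scl (fun r u u' => h3 r a b u u')).
Qed.

Definition wt (w : nat) (A : G -> G -> G -> G) := forall t a b c,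
  t *: A (Sc t a) (Sc t b) (Sc t c) = t ^+ w *: Sc t (A a b c).

Lemma phi1_wt T : lin3 T -> wt 0 (phi1_hat T).
Proof.
move/lin3_scl => [s1 s2 s3] t a b c; apply: pairE; rewrite /Sc /phi1_hat /=;
  rewrite ?in2_scl ?s1 ?s2 ?s3 /=;
  by rewrite ?scalerDr ?scalerN ?scalerA ?exprS ?expr0 ?mulr1 ?mul1r ?mulrA ?scaler0 ?scale1r.
Qed.

Lemma mu1_wt T : lin3 T -> wt 1 (mu1_hat T).
Proof.
move/lin3_scl => [s1 s2 s3] t a b c; apply: pairE; rewrite /Sc /mu1_hat /=;
  rewrite ?in2_scl ?s1 ?s2 ?s3 /=;
  by rewrite ?scalerDr ?scalerN ?scalerA ?exprS ?expr0 ?mulr1 ?mul1r ?mulrA ?scaler0 ?scale1r.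
Qed.

Lemma psi_wt T : lin3 T -> wt 2 (psi_hat T).
Proof.
move/lin3_scl => [s1 s2 s3] t a b c; apply: pairE; rewrite /Sc /psi_hat /=;
  rewrite ?in2_scl ?s1 ?s2 ?s3 /=;
  by rewrite ?scalerDr ?scalerN ?scalerA ?exprS ?expr0 ?mulr1 ?mul1r ?mulrA ?scaler0 ?scale1r.
Qed.

Lemma mu2_wt T : lin3 T -> wt 3 (mu2_hat T).
Proof.
move/lin3_scl => [s1 s2 s3] t a b c; apply: pairE; rewrite /Sc /mu2_hat /=;
  rewrite ?in2_scl ?s1 ?s2 ?s3 /=;
  by rewrite ?scalerDr ?scalerN ?scalerA ?exprS ?expr0 ?mulr1 ?mul1r ?mulrA ?scaler0 ?scale1r.
Qed.

Lemma phi2_wt T : lin3 T -> wt 4 (phi2_hat T).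
Proof.
move/lin3_scl => [s1 s2 s3] t a b c; apply: pairE; rewrite /Sc /phi2_hat /=;
  rewrite ?in2_scl ?s1 ?s2 ?s3 /=;
  by rewrite ?scalerDr ?scalerN ?scalerA ?exprS ?expr0 ?mulr1 ?mul1r ?mulrA ?scaler0 ?scale1r.
Qed.


Definition th T (i : nat) := match i with
  | 0 => phi1_hat T | 1 => mu1_hat T | 2 => psi_hat T | 3 => mu2_hat T | _ => phi2_hat T end.

Lemma th_lin T i : lin3 T -> lin3 (th T i).
Proof.
move=> h; case: i => [|[|[|[|i]]]] /=;
  [exact: phi1_lin|exact: mu1_lin|exact: psi_lin|exact: mu2_lin|exact: phi2_lin].
Qed.

Lemma th_wt T i : lin3 T -> (i < 5)%N -> wt i (th T i).
Proof.
move=> h; case: i => [|[|[|[|[|i]]]]] //= _;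
  [exact: phi1_wt|exact: mu1_wt|exact: psi_wt|exact: mu2_wt|exact: phi2_wt].
Qed.

Lemma lin3_add T : lin3 T ->
  [/\ forall a a' b c, T (a + a') b c = T a b c + T a' b c,
      forall a b b' c, T a (b + b') c = T a b c + T a b' c
    & forall a b c c', T a b (c + c') = T a b c + T a b c'].
Proof.
case=> h1 h2 h3; split=> *.
- exact: (lin_add (fun r u u' => h1 r u u' _ _)).
- exact: (lin_add (fun r u u' => h2 r _ u u' _)).
- exact: (lin_add (fun r u u' => h3 r _ _ u u')).
Qed.

Lemma skew T : lin3 T -> (forall x y, T x x y = 0) -> forall a b c, T a b c = - T b a c.
Proof.
move=> /lin3_add [a1 a2 a3] hx a b c.
have := hx (a + b) c; rewrite a1 !a2 !hx add0r addr0 => /eqP.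
by rewrite addr_eq0 => /eqP.
Qed.

Lemma decomp T : lin3 T -> (forall x y, T x x y = 0) ->
  forall a b c, T a b c = \sum_(0 <= i < 5) th T i a b c.
Proof.
move=> hl hx; have sk := skew hl hx; move: hl => /lin3_add [a1 a2 a3] a b c.
have sp : forall p : G, p = in1 V2 p.1 + in2 V1 p.2.
  by case=> x u; apply: pairE; rewrite /= ?addr0 ?add0r.
rewrite {1}(sp a) {1}(sp b) {1}(sp c) !a1 !a2 !a3.
rewrite (sk (in1 V2 a.1) (in2 V1 b.2)) (sk (in2 V1 a.2) (in1 V2 b.1) (in2 V1 c.2)).
rewrite !big_nat_recl // big_geq // /=.
by apply: pairE => /=; rewrite ?add0r ?addr0 !addrA [LHS](ACl (1*2*5*3*7*4*6*8)).
Qed.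

Lemma sum_if (W : zmodType) n k (F : nat -> W) : (k < n)%N ->
  \sum_(0 <= d < n) (if (k == d)%N then F d else 0) = F k.
Proof.
elim: n => // n IH; rewrite ltnS leq_eqVlt big_nat_recr //= => /orP[/eqP ->|lt].
- rewrite eqxx big1_seq ?add0r // => d; rewrite mem_index_iota => /andP[_ h].
  by rewrite (gtn_eqF h).
- by rewrite IH // (ltn_eqF lt) addr0.
Qed.

Lemma regroup (W : lmodType K) (t : K) (b : nat -> nat -> W) :
  \sum_(0 <= d < 9) t ^+ d *: (\sum_(0 <= i < 5) \sum_(0 <= j < 5)
       (if (Nat.add i j == d)%N then b i j else 0))
  = \sum_(0 <= i < 5) \sum_(0 <= j < 5) t ^+ (i + j) *: b i j.
Proof.
transitivity (\sum_(0 <= d < 9) \sum_(0 <= i < 5) \sum_(0 <= j < 5)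
       (if (Nat.add i j == d)%N then t ^+ d *: b i j else 0)).
  apply: eq_bigr => d _; rewrite scaler_sumr; apply: eq_bigr => i _.
  rewrite scaler_sumr; apply: eq_bigr => j _.
  by case: eqP => _; rewrite ?scaler0.
rewrite exchange_big; apply: eq_big_nat => i /andP[_ Hi].
rewrite exchange_big; apply: eq_big_nat => j /andP[_ Hj].
rewrite (sum_if (fun d => t ^+ d *: b i j)) //.
by apply: (@leq_trans (4 + 4).+1); rewrite // ltnS leq_add // -ltnS.
Qed.

Definition SX (t : K) (X : nat -> G * G) : nat -> G * G :=
  fun n => (Sc t (X n).1, Sc t (X n).2).

Lemma br1_wt (t : K) wA wB (A B : G -> G -> G -> G) (X : nat -> G * G) (x : G) : lin3 A -> lin3 B -> wt wA A -> wt wB B ->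
  t ^+ 2 *: br1 A B (SX t X) (Sc t x) = t ^+ (wA + wB) *: Sc t (br1 A B X x).
Proof.
move=> lA lB hA hB; rewrite !br1E /= scalerDr.
rewrite (c11_wt (Sc_lin t) lA (hA t) (hB t)) (c11_wt (Sc_lin t) lB (hB t) (hA t)).
by rewrite [(wB + wA)%N]addnC (lin_add (Sc_lin t)) scalerDr.
Qed.

Lemma br1_sym (A B : G -> G -> G -> G) (X : nat -> G * G) (x : G) : br1 A B X x = br1 B A X x.
Proof. by rewrite !br1E addrC. Qed.

Lemma brsum T (X : nat -> G * G) (x : G) : lin3 T -> (forall x y, T x x y = 0) ->
  br1 T T X x = \sum_(0 <= i < 5) \sum_(0 <= j < 5) br1 (th T i) (th T j) X x.
Proof.
move=> hl hx.
have E : forall a b c d y, c11 T T a b c d y =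
    \sum_(0 <= i < 5) \sum_(0 <= j < 5) c11 (th T i) (th T j) a b c d y.
  move=> a b c d y.
  rewrite (@c11_ext _ _ T (fun a b c => \sum_(0 <= i < 5) th T i a b c) T
                       (fun a b c => \sum_(0 <= i < 5) th T i a b c)); last first.
  - exact: decomp.
  - exact: decomp.
  rewrite c11_suml; apply: eq_bigr => i _; exact: c11_sumr (th_lin i hl).
rewrite br1E E.
have R : forall i j, br1 (th T i) (th T j) X x =
   c11 (th T i) (th T j) (X 0%N).1 (X 0%N).2 (X 1%N).1 (X 1%N).2 x
   + c11 (th T j) (th T i) (X 0%N).1 (X 0%N).2 (X 1%N).1 (X 1%N).2 x.
  by move=> i j; rewrite br1E.
symmetry.
under eq_bigr => i _ do under eq_bigr => j _ do rewrite R.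
under eq_bigr => i _ do rewrite big_split.
by rewrite big_split /= [X in _ + X = _]exchange_big.
Qed.

Definition vv T (X : nat -> G * G) (x : G) d := \sum_(0 <= i < 5) \sum_(0 <= j < 5)
  (if (Nat.add i j == d)%N then br1 (th T i) (th T j) X x else 0).

Lemma key T (t : K) (X : nat -> G * G) (x : G) : lin3 T -> (forall x y, T x x y = 0) ->
  t ^+ 2 *: br1 T T (SX t X) (Sc t x) = Sc t (\sum_(0 <= d < 9) t ^+ d *: vv T X x d).
Proof.
move=> hl hx; rewrite (brsum _ _ hl hx) /vv regroup (lin_sum (Sc_lin t)) scaler_sumr.
apply: eq_big_nat => i /andP[_ Hi].
rewrite scaler_sumr (lin_sum (Sc_lin t)); apply: eq_big_nat => j /andP[_ Hj].
rewrite (lin_scl (Sc_lin t)); apply: br1_wt; try exact: th_lin; exact: th_wt.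
Qed.

Lemma two_scale (W : lmodType K) (u : W) : (2 : K) *: u = u + u.
Proof. by rewrite scaler_nat mulr2n. Qed.

Arguments br1 : simpl never.
Ltac vvsolve := rewrite /vv !big_nat_recl // !big_geq // /= ?add0r ?addr0.

Section VV.
Variables (T : G -> G -> G -> G) (X : nat -> G * G) (x : G).
Hypothesis n2 : (2 : K) != 0.

Lemma vvE1 : vv T X x 1 = 2 *: br1 (phi1_hat T) (mu1_hat T) X x.
Proof. vvsolve; rewrite (br1_sym (mu1_hat T)). move: (br1 (phi1_hat T) (mu1_hat T) X x) => u0. by rewrite two_scale. Qed.
Lemma vvE2 : vv T X x 2 = 2 *: (br1 (psi_hat T) (phi1_hat T) X x + 2^-1 *: br1 (mu1_hat T) (mu1_hat T) X x).
Proof.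
vvsolve; rewrite (br1_sym (phi1_hat T) (psi_hat T)).
move: (br1 (psi_hat T) (phi1_hat T) X x) (br1 (mu1_hat T) (mu1_hat T) X x) => u0 u1.
rewrite !scalerDr scalerA mulfV // scale1r !two_scale !addrA.
by rewrite [LHS](ACl (1*3*2)).
Qed.
Lemma vvE3 : vv T X x 3 = 2 *: (br1 (phi1_hat T) (mu2_hat T) X x + br1 (psi_hat T) (mu1_hat T) X x).
Proof.
vvsolve; rewrite (br1_sym (mu1_hat T) (psi_hat T)) (br1_sym (mu2_hat T) (phi1_hat T)).
move: (br1 (phi1_hat T) (mu2_hat T) X x) (br1 (psi_hat T) (mu1_hat T) X x) => u0 u1.
rewrite !scalerDr !two_scale !addrA.
by rewrite [LHS](ACl (1*4*2*3)).
Qed.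
Lemma vvE4 : vv T X x 4 = 2 *: (br1 (phi1_hat T) (phi2_hat T) X x + br1 (mu1_hat T) (mu2_hat T) X x + 2^-1 *: br1 (psi_hat T) (psi_hat T) X x).
Proof.
vvsolve; rewrite (br1_sym (mu2_hat T) (mu1_hat T)) (br1_sym (phi2_hat T) (phi1_hat T)).
move: (br1 (phi1_hat T) (phi2_hat T) X x) (br1 (mu1_hat T) (mu2_hat T) X x) (br1 (psi_hat T) (psi_hat T) X x) => u0 u1 u2.
rewrite !scalerDr scalerA mulfV // scale1r !two_scale !addrA.
by rewrite [LHS](ACl (1*5*2*4*3)).
Qed.
Lemma vvE5 : vv T X x 5 = 2 *: (br1 (mu1_hat T) (phi2_hat T) X x + br1 (psi_hat T) (mu2_hat T) X x).
Proof.
vvsolve; rewrite (br1_sym (mu2_hat T) (psi_hat T)) (br1_sym (phi2_hat T) (mu1_hat T)).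
move: (br1 (mu1_hat T) (phi2_hat T) X x) (br1 (psi_hat T) (mu2_hat T) X x) => u0 u1.
rewrite !scalerDr !two_scale !addrA.
by rewrite [LHS](ACl (1*4*2*3)).
Qed.
Lemma vvE6 : vv T X x 6 = 2 *: (br1 (psi_hat T) (phi2_hat T) X x + 2^-1 *: br1 (mu2_hat T) (mu2_hat T) X x).
Proof.
vvsolve; rewrite (br1_sym (phi2_hat T) (psi_hat T)).
move: (br1 (psi_hat T) (phi2_hat T) X x) (br1 (mu2_hat T) (mu2_hat T) X x) => u0 u1.
rewrite !scalerDr scalerA mulfV // scale1r !two_scale !addrA.
by rewrite [LHS](ACl (1*3*2)).
Qed.
Lemma vvE7 : vv T X x 7 = 2 *: br1 (mu2_hat T) (phi2_hat T) X x.
Proof. vvsolve; rewrite (br1_sym (phi2_hat T) (mu2_hat T)). move: (br1 (mu2_hat T) (phi2_hat T) X x) => u0. by rewrite two_scale. Qed.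
End VV.

Lemma lin3_zero T : lin3 T ->
  [/\ forall b c, T 0 b c = 0, forall a c, T a 0 c = 0 & forall a b, T a b 0 = 0].
Proof.
case=> h1 h2 h3; split=> *.
- exact: (zero_of (fun r u u' => h1 r u u' _ _)).
- exact: (zero_of (fun r u u' => h2 r _ u u' _)).
- exact: (zero_of (fun r u u' => h3 r _ _ u u')).
Qed.

Lemma in1_0 : in1 V2 (0 : V1) = 0. Proof. by apply: pairE. Qed.
Lemma in2_0 : in2 V1 (0 : V2) = 0. Proof. by apply: pairE. Qed.

Lemma phi1_sq T (X : nat -> G * G) (x : G) : lin3 T -> br1 (phi1_hat T) (phi1_hat T) X x = 0.
Proof.
move=> /lin3_zero [z1 z2 z3]; rewrite br1E.
suff H : forall a b c d y, c11 (phi1_hat T) (phi1_hat T) a b c d y = 0 by rewrite !H addr0.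
move=> a b c d y; apply: pairE; rewrite /c11 /phi1_hat /= ?in1_0 ?z1 ?z2 ?z3 /=.
  by rewrite !addr0 subr0.
by rewrite !addr0 subr0.
Qed.

Lemma phi2_sq T (X : nat -> G * G) (x : G) : lin3 T -> br1 (phi2_hat T) (phi2_hat T) X x = 0.
Proof.
move=> /lin3_zero [z1 z2 z3]; rewrite br1E.
suff H : forall a b c d y, c11 (phi2_hat T) (phi2_hat T) a b c d y = 0 by rewrite !H addr0.
move=> a b c d y; apply: pairE; rewrite /c11 /phi2_hat /= ?in2_0 ?z1 ?z2 ?z3 /=.
  by rewrite !addr0 subr0.
by rewrite !addr0 subr0.
Qed.

Lemma vv0 T (X : nat -> G * G) (x : G) : lin3 T -> vv T X x 0 = 0.
Proof. by move=> hl; vvsolve; rewrite phi1_sq. Qed.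
Lemma vv8 T (X : nat -> G * G) (x : G) : lin3 T -> vv T X x 8 = 0.
Proof. by move=> hl; vvsolve; rewrite phi2_sq. Qed.

Lemma Sc1 p : Sc 1 p = p.
Proof. by case: p => ? ?; rewrite /Sc scale1r. Qed.

Lemma Sc_inj0 t p : t != 0 -> Sc t p = 0 -> p = 0.
Proof.
case: p => p1 p2 t0 h; have h1 := congr1 fst h; have h2 := congr1 snd h.
simpl in h1, h2; apply: pairE => /=; first exact: h1.
by move/eqP: h2; rewrite scaler_eq0 (negbTE t0) => /eqP.
Qed.

Lemma SX1 (A B : G -> G -> G -> G) (X : nat -> G * G) (x : G) :
  br1 A B (SX 1 X) (Sc 1 x) = br1 A B X x.
Proof. by rewrite !br1E /= !Sc1. Qed.

End Spec.

Theorem proposition3p8 (K : fieldType) (charK0 : [pchar K] =i pred0)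
  (V1 V2 : lmodType K) (T : V1 * V2 -> V1 * V2 -> V1 * V2 -> V1 * V2)
  (T_lin1 : forall (r : K) a a' b c, T (r *: a + a') b c = r *: T a b c + T a' b c)
  (T_lin2 : forall (r : K) a b b' c, T a (r *: b + b') c = r *: T a b c + T a b' c)
  (T_lin3 : forall (r : K) a b c c', T a b (r *: c + c') = r *: T a b c + T a b c')
  (T_lts1 : forall x y, T x x y = 0)
  (T_lts2 : forall x y z, T x y z + T y z x + T z x y = 0) :
  let ph1 := phi1_hat T in let m1 := mu1_hat T in let ps := psi_hat T in
  let m2 := mu2_hat T in let ph2 := phi2_hat T in
  (forall X x, br1 T T X x = 0) <->
  (forall X x, br1 ph1 m1 X x = 0) /\
      (forall X x, br1 ps ph1 X x + 2^-1 *: br1 m1 m1 X x = 0) /\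
      (forall X x, br1 ph1 m2 X x + br1 ps m1 X x = 0) /\
      (forall X x, br1 ph1 ph2 X x + br1 m1 m2 X x + 2^-1 *: br1 ps ps X x = 0) /\
      (forall X x, br1 m1 ph2 X x + br1 ps m2 X x = 0) /\
      (forall X x, br1 ps ph2 X x + 2^-1 *: br1 m2 m2 X x = 0) /\
      (forall X x, br1 m2 ph2 X x = 0).
Proof.
cbv zeta.
have hl : lin3 T by split.
have n2 : (2 : K) != 0 by move/pcharf0P: (charK0) => ->.
have half : forall u : V1 * V2, 2 *: u = 0 -> u = 0.
  by move=> u /eqP; rewrite scaler_eq0 (negbTE n2) => /eqP.
split.
- move=> H.
  have vz : forall X x d, (d < 9)%N -> vv T X x d = 0.
    move=> X x; apply: (@poly0 K charK0 _ 9 (vv T X x)) => t t0.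
    have := key t X x hl T_lts1; rewrite H scaler0 => /esym.
    exact: Sc_inj0.
  split; [|split; [|split; [|split; [|split; [|split]]]]] => X x; apply: half.
  + by rewrite -vvE1 vz.
  + by rewrite -vvE2 ?vz.
  + by rewrite -vvE3 vz.
  + by rewrite -vvE4 ?vz.
  + by rewrite -vvE5 vz.
  + by rewrite -vvE6 ?vz.
  + by rewrite -vvE7 vz.
- move=> [h1 [h2 [h3 [h4 [h5 [h6 h7]]]]]] X x.
  have := key 1 X x hl T_lts1; rewrite expr1n scale1r SX1 => ->.
  rewrite !big_nat_recl // big_geq // !expr1n !scale1r.
  rewrite (vv0 _ _ hl) (vv8 _ _ hl) vvE1 ?vvE2 ?vvE3 ?vvE4 ?vvE5 ?vvE6 ?vvE7 //.
  rewrite (h1 X x) (h2 X x) (h3 X x) (h4 X x) (h5 X x) (h6 X x) (h7 X x) !scaler0 !add0r.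
  by rewrite ?addr0 Sc1.
Qed.
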